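(* Let $\Gamma_1=\langle S_1\mid R_1\rangle$ and $\Gamma_2=\langle S_2\mid R_2\rangle$ be discrete groups such that the path metric on the Cayley graph $\mathrm{Cay}(\Gamma_i,S_i)$ is conditionally strictly negative definite for $i=1,2$. Then the path metric on $\mathrm{Cay}(\Gamma_1\ast\Gamma_2,S_1\cup S_2)$ is conditionally strictly negative definite.
   Context: $\Gamma_1\ast\Gamma_2$ is the free product of groups. $\mathrm{Cay}(\Gamma,S)$ is the graph with vertex set $\Gamma$ and edges $\{g,gs\}$, $s\in S\cup S^{-1}$, $gs\ne g$; its path metric is the shortest-path distance. A symmetric real function $K$ on $\Gamma\times\Gamma$ is conditionally strictly negative definite if for every finitely supported $\lambda\colon\Gamma\to\mathbb{C}$, $\lambda\neq0$, with $\sum_g\lambda(g)=0$ one has $\sum_{g,h}\lambda(g)\overline{\lambda(h)}K(g,h)<0$. *)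

(* Defs.v *)
From HB Require Import structures.
From mathcomp Require Import all_boot all_order all_algebra.
From mathcomp Require Import boolp reals Rstruct complex.
Set Implicit Arguments. Unset Strict Implicit. Unset Printing Implicit Defensive.
Import Order.TTheory GRing.Theory Num.Theory.

Notation CC := (complex Rdefinitions.R).

Definition in_generated_subgroup (G : groupType) (S : G -> Prop) (g : G) : Prop :=
  forall P : G -> Prop,
    (forall s, S s -> P s) ->
    P (1%g : G) ->
    (forall x y, P x -> P y -> P ((x * y)%g)) ->
    (forall x, P x -> P ((x^-1)%g)) ->
    P g.

Definition generates (G : groupType) (S : G -> Prop) : Prop :=
  forall g : G, in_generated_subgroup S g.

Definition is_free_product (G1 G2 G : groupType) (i1 : G1 -> G) (i2 : G2 -> G) : Prop :=
  monoid.monoid_morphism i1 /\ monoid.monoid_morphism i2 /\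
  forall (H : groupType) (f1 : G1 -> H) (f2 : G2 -> H),
    monoid.monoid_morphism f1 -> monoid.monoid_morphism f2 ->
    exists! f : G -> H,
      monoid.monoid_morphism f /\ (forall x, f (i1 x) = f1 x) /\ (forall x, f (i2 x) = f2 x).

Definition cay_adj (G : groupType) (S : G -> Prop) (g h : G) : Prop :=
  g <> h /\ exists s, S s /\ (h = (g * s)%g \/ h = (g * s^-1)%g).

Fixpoint cay_walk (G : groupType) (S : G -> Prop) (x : G) (p : seq G) : Prop :=
  match p with
  | [::] => True
  | y :: p' => cay_adj S x y /\ cay_walk S y p'
  end.

Definition cay_walk_len (G : groupType) (S : G -> Prop) (g h : G) (n : nat) : Prop :=
  exists p : seq G, size p = n /\ cay_walk S g p /\ last g p = h.

(* Path metric (shortest-path distance); set to 0 if g, h are not connected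
   (this never happens when S generates G). *)
Definition cay_dist (G : groupType) (S : G -> Prop) (g h : G) : nat :=
  match pselect (exists n, cay_walk_len S g h n) with
  | left ex =>
      @ex_minn (fun n => `[< cay_walk_len S g h n >])
        (let: ex_intro n Hn := ex in ex_intro _ n (asboolT Hn))
  | right _ => 0%N
  end.

Local Open Scope ring_scope.

Definition cond_strict_neg_def (T : eqType) (K : T -> T -> Rdefinitions.R) : Prop :=
  (forall x y, K x y = K y x) /\
  forall (lam : T -> CC) (supp : seq T),
    uniq supp ->
    (forall x, x \notin supp -> lam x = 0) ->
    (exists x, lam x != 0) ->
    \sum_(x <- supp) lam x = 0 ->
    \sum_(x <- supp) \sum_(y <- supp) lam x * (lam y)^* * real_complex Rdefinitions.R (K x y) < 0.

Definition cay_metric (G : groupType) (S : G -> Prop) (g h : G) : Rdefinitions.R :=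
  (cay_dist S g h)%:R.

(* Main.v *)
Require Import Defs.
From HB Require Import structures.
From mathcomp Require Import all_boot all_order all_algebra.
From mathcomp Require Import boolp reals Rstruct complex.
Set Implicit Arguments. Unset Strict Implicit. Unset Printing Implicit Defensive.
Import Order.TTheory GRing.Theory Num.Theory.

Section Walks.
Local Open Scope group_scope.
Variables (G : groupType) (S : G -> Prop).

Lemma adj_sym g h : cay_adj S g h -> cay_adj S h g.
Proof.
case=> ne [s [Ss E]]; split; first by move=> e; apply: ne; rewrite e.
exists s; split=> //; case: E => ->; [right|left]; by rewrite ?mulgK ?mulgVK.
Qed.

Lemma walk_len0 g : cay_walk_len S g g 0.
Proof. by exists [::]. Qed.

Lemma walk_len_cons g z h n :
  cay_adj S g z -> cay_walk_len S z h n -> cay_walk_len S g h n.+1.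
Proof. by move=> a [p [sp [wp lp]]]; exists (z :: p); rewrite /= sp. Qed.

Lemma walk_len_consE g h n :
  cay_walk_len S g h n.+1 -> exists z, cay_adj S g z /\ cay_walk_len S z h n.
Proof.
case=> p [sp [wp lp]]; case: p sp wp lp => [|z p] //= [sp] [a wp] lp.
by exists z; split=> //; exists p.
Qed.

Lemma walk_len_trans g z h m n :
  cay_walk_len S g z m -> cay_walk_len S z h n -> cay_walk_len S g h (m + n).
Proof.
elim: m g => [|m IH] g.
  by case=> p [sp [_ lp]]; case: p sp lp => [|//] _ /= <-.
move=> /walk_len_consE [y [a w]] w2; rewrite addSn.
exact: walk_len_cons a (IH _ w w2).
Qed.

Lemma walk_len1 g h : cay_adj S g h -> cay_walk_len S g h 1.
Proof. by move=> a; apply: walk_len_cons a (walk_len0 _). Qed.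

Lemma walk_len_sym g h n : cay_walk_len S g h n -> cay_walk_len S h g n.
Proof.
elim: n g => [|n IH] g.
  by case=> p [sp [_ lp]]; case: p sp lp => [|//] _ /= <-; apply: walk_len0.
move=> /walk_len_consE [z [a w]].
rewrite -addn1; apply: walk_len_trans (IH _ w) (walk_len1 (adj_sym a)).
Qed.

Lemma connected_of_gen : generates S -> forall g h, exists n, cay_walk_len S g h n.
Proof.
move=> gen.
have tr c g h n : cay_walk_len S g h n -> cay_walk_len S (c * g) (c * h) n.
  elim: n g => [|n IH] g.
    by case=> p [sp [_ lp]]; case: p sp lp => [|//] _ /= <-; apply: walk_len0.
  move=> /walk_len_consE [z [[ne [s [Ss E]]] w]].
  apply: (walk_len_cons (z := c * z)) (IH _ w); split.
    by move/mulgI.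
  exists s; split=> //; case: E => ->; [left|right]; by rewrite mulgA.
have P1 : forall x, exists n, cay_walk_len S 1 x n.
  move=> x; apply: (gen x (fun x => exists n, cay_walk_len S 1 x n)).
  - move=> s Ss; case: (eqVneq (1 * s) 1) => e.
      by exists 0%N; rewrite -[s]mul1g e; apply: walk_len0.
    exists 1%N; apply: walk_len1; split; first by move=> E; move: e; rewrite mul1g -E eqxx.
    by exists s; split=> //; left; rewrite mul1g.
  - by exists 0%N; apply: walk_len0.
  - move=> y z [m wm] [n wn]; exists (m + n)%N; apply: walk_len_trans wm _.
    by move: (tr y _ _ _ wn); rewrite mulg1.
  - move=> y [n wn]; exists n; apply: walk_len_sym.
    by move: (tr y^-1 _ _ _ wn); rewrite mulg1 mulVg.
move=> g h; case: (P1 (g^-1 * h)) => n w; exists n.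
by move: (tr g _ _ _ w); rewrite mulg1 mulVKg.
Qed.

Lemma dist_spec g h : (exists n, cay_walk_len S g h n) ->
  cay_walk_len S g h (cay_dist S g h) /\
  forall n, cay_walk_len S g h n -> (cay_dist S g h <= n)%N.
Proof.
rewrite /cay_dist; case: pselect => [ex|//] _.
case: ex_minnP => m /asboolP Hm Hmin; split=> // n wn.
by apply: Hmin; apply/asboolP.
Qed.

Lemma dist_le g h n : cay_walk_len S g h n -> (cay_dist S g h <= n)%N.
Proof. by move=> w; apply: (proj2 (dist_spec (ex_intro _ n w))). Qed.

Lemma dist_sym g h : cay_dist S g h = cay_dist S h g.
Proof.
case: (pselect (exists n, cay_walk_len S g h n)) => ex.
  have ex' : exists n, cay_walk_len S h g n.
    by case: ex => n w; exists n; apply: walk_len_sym.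
  case: (dist_spec ex) => w1 m1; case: (dist_spec ex') => w2 m2.
  apply/eqP; rewrite eqn_leq m1 ?m2 //; exact: walk_len_sym.
have nex' : ~ exists n, cay_walk_len S h g n.
  by case=> n w; apply: ex; exists n; apply: walk_len_sym.
rewrite /cay_dist; case: pselect => //; case: pselect => //.
Qed.

Lemma dist_tri g z h : generates S ->
  (cay_dist S g h <= cay_dist S g z + cay_dist S z h)%N.
Proof.
move=> gen; apply: dist_le; apply: walk_len_trans.
  exact: (proj1 (dist_spec (connected_of_gen gen g z))).
exact: (proj1 (dist_spec (connected_of_gen gen z h))).
Qed.

Lemma dist_self g : cay_dist S g g = 0%N.
Proof. by apply/eqP; rewrite -leqn0; apply: dist_le (walk_len0 g). Qed.

Lemma dist_step g s : S s -> (cay_dist S g (g * s) <= 1)%N /\ (cay_dist S g (g * s^-1) <= 1)%N.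
Proof.
move=> Ss; split.
  case: (eqVneq g (g * s)) => e.
    by rewrite -e dist_self.
  apply: dist_le; apply: walk_len1; split; first by apply/eqP.
  by exists s; split=> //; left.
case: (eqVneq g (g * s^-1)) => e.
  by rewrite -e dist_self.
apply: dist_le; apply: walk_len1; split; first by apply/eqP.
by exists s; split=> //; right.
Qed.


End Walks.

Lemma walk_len_map (G G' : groupType) (S : G -> Prop) (S' : G' -> Prop)
  (f : G -> G') (finj : injective f)
  (fadj : forall u s, S s -> exists t, S' t /\ f (u * s)%g = (f u * t)%g /\ f (u * s^-1)%g = (f u * t^-1)%g)
  g h n : cay_walk_len S g h n -> cay_walk_len S' (f g) (f h) n.
Proof.
elim: n g => [|n IH] g.
  by case=> p [sp [_ lp]]; case: p sp lp => [|//] _ /= <-; apply: walk_len0.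
move=> /walk_len_consE [z [[ne [s [Ss E]]] w]].
apply: (walk_len_cons (z := f z)) (IH _ w); split.
  by move/finj.
case: (fadj g s Ss) => t [S't [e1 e2]].
exists t; split=> //; case: E => ->; [left|right]; by [].
Qed.

Section PermGroup.
Local Open Scope group_scope.
Variable X : Type.
Record xperm := XPerm { pf : X -> X; pinv : X -> X; pK : cancel pf pinv; pKV : cancel pinv pf }.
HB.instance Definition _ := gen_eqMixin xperm.
HB.instance Definition _ := gen_choiceMixin xperm.

Lemma xperm_eq p q : pf p =1 pf q -> p = q.
Proof.
case: p => f fi fK fKV; case: q => g gi gK gKV /= e.
have efg : f = g by apply: funext.
subst g.
have efi : fi = gi.
  apply: funext => x; by rewrite -{1}(gKV x) fK.
subst gi.
by rewrite (Prop_irrelevance fK gK) (Prop_irrelevance fKV gKV).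
Qed.

Definition xone := @XPerm id id (fun _ => erefl) (fun _ => erefl).
Lemma xmul_K p q : cancel (pf q \o pf p) (pinv p \o pinv q).
Proof. by move=> x; rewrite /= pK pK. Qed.
Lemma xmul_KV p q : cancel (pinv p \o pinv q) (pf q \o pf p).
Proof. by move=> x; rewrite /= pKV pKV. Qed.
Definition xmul p q := @XPerm (pf q \o pf p) (pinv p \o pinv q) (xmul_K p q) (xmul_KV p q).
Definition xinv p := @XPerm (pinv p) (pf p) (pKV p) (pK p).

Lemma xmulA : associative xmul. Proof. by move=> p q r; apply: xperm_eq. Qed.
Lemma xmul1 : left_id xone xmul. Proof. by move=> p; apply: xperm_eq. Qed.
Lemma xmulg1 : right_id xone xmul. Proof. by move=> p; apply: xperm_eq. Qed.
Lemma xmulV : left_inverse xone xinv xmul.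
Proof. by move=> p; apply: xperm_eq => x /=; rewrite pKV. Qed.
Lemma xmulgV : right_inverse xone xinv xmul.
Proof. by move=> p; apply: xperm_eq => x /=; rewrite pK. Qed.

HB.instance Definition _ := isGroup.Build xperm xmulA xmul1 xmulg1 xmulV xmulgV.

Lemma pf_mul (p q : xperm) x : pf (p * q) x = pf q (pf p x). Proof. by []. Qed.
Lemma pf_one x : pf (1 : xperm) x = x. Proof. by []. Qed.
End PermGroup.

Section Letters.
Local Open Scope group_scope.
Variables (G1 G2 : groupType).
Definition letter := (G1 + G2)%type.
Definition nontriv (l : letter) := match l with inl a => a != 1 | inr b => b != 1 end.
Definition sameside (l l' : letter) :=
  match l, l' with inl _, inl _ => true | inr _, inr _ => true | _, _ => false end.
Fixpoint reduced (w : seq letter) := match w with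
  | [::] => true
  | l :: w' => [&& nontriv l, (if w' is l' :: _ then ~~ sameside l l' else true) & reduced w']
  end.
Definition prj1 (l : letter) : option G1 := if l is inl a then Some a else None.
Definition prj2 (l : letter) : option G2 := if l is inr a then Some a else None.
Fixpoint ptails (x : seq letter) := if x is _ :: x' then x' :: ptails x' else [::].

Lemma reduced_cons l w : reduced (l :: w) -> reduced w.
Proof. by case/and3P. Qed.
End Letters.
Arguments prj1 {G1 G2}. Arguments prj2 {G1 G2}. Arguments nontriv {G1 G2}.
Arguments sameside {G1 G2}. Arguments reduced {G1 G2}. Arguments ptails {G1 G2}.

Definition pi (G1 G2 H : groupType) (prj : letter G1 G2 -> option H) :=
  fix pi (p x : seq (letter G1 G2)) : H :=
  match x with
  | [::] => 1%g
  | c :: x' => if x' == p then (if prj c is Some a then a else 1%g) else pi p x'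
  end.

Section PiLemmas.
Local Open Scope group_scope.
Variables (G1 G2 H : groupType) (prj : letter G1 G2 -> option H).

Lemma pi_small p x : (size x <= size p)%N -> pi prj p x = 1.
Proof.
elim: x => [//|c x IH] /= le; have le' : (size x <= size p)%N by apply: ltnW.
case: eqP => [e|_]; last exact: IH.
by move: le; rewrite e ltnn.
Qed.

Lemma pi_self p : pi prj p p = 1.
Proof. exact: pi_small. Qed.

Lemma pi_cons_none c p x : prj c = None -> pi prj p (c :: x) = pi prj p x.
Proof. by move=> /= ->; case: eqP => // ->; rewrite pi_self. Qed.

Lemma pi_notin p x : p \notin ptails x -> pi prj p x = 1.
Proof.
elim: x => [//|c x IH] /=; rewrite in_cons negb_or => /andP [ne ni].
by rewrite eq_sym (negbTE ne) IH.
Qed.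
End PiLemmas.

Section Generic.
Local Open Scope group_scope.
Variables (G1 G2 H : groupType) (inj : H -> letter G1 G2) (prj : letter G1 G2 -> option H).
Hypotheses (prjK : forall a, prj (inj a) = Some a)
  (prjS : forall l a, prj l = Some a -> l = inj a)
  (ntinj : forall a, nontriv (inj a) = (a != 1))
  (sside : forall a l, sameside (inj a) l = (prj l != None)).

Definition mulw (a : H) (w : seq (letter G1 G2)) :=
  if a == 1 then w else
  match w with
  | c :: w' => match prj c with
               | Some b => if b * a == 1 then w' else inj (b * a) :: w'
               | None => inj a :: w
               end
  | [::] => [:: inj a]
  end.

Lemma reduced_mulw a w : reduced w -> reduced (mulw a w).
Proof using prjK prjS ntinj sside.
rewrite /mulw; case: eqP => // /eqP a1.
case: w => [|c w] /=; first by rewrite ntinj a1.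
case E: (prj c) => [b|].
  case: eqP => [_|/eqP ba]; first by case/and3P.
  have -> := prjS E; rewrite /= !ntinj ba => /and3P [_ ns ->]; rewrite andbT.
  by case: w ns => [|c' w] //; rewrite !sside.
move=> r; rewrite /= ntinj a1 sside E /=; exact: r.
Qed.

Lemma mulwM a b w : reduced w -> mulw (a * b) w = mulw b (mulw a w).
Proof using prjK prjS ntinj sside.
move=> rw; rewrite /mulw.
case: (eqVneq a 1) => [->|a1]; first by rewrite mul1g.
case: (eqVneq b 1) => [->|b1]; first by rewrite mulg1 (negbTE a1).
case: w rw => [|c w] rw /=.
  by rewrite prjK.
case E: (prj c) => [d|]; last by rewrite prjK.
have ec := prjS E.
have d1 : d != 1 by move: rw; rewrite ec /= ntinj => /and3P [].
have hw : if w is c' :: _ then prj c' = None else True.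
  case: w rw => [|c' w] //= /and3P [_ ns _]; move: ns.
  by rewrite ec sside; case: (prj c').
case: (eqVneq (d * a) 1) => da.
  have ea : a = d^-1 by rewrite (mulg1_eq da).
  rewrite ea mulgA mulgV mul1g (negbTE b1).
  case: (eqVneq (d^-1 * b) 1) => db.
    have eb : b = d by rewrite -(mulg1_eq db) invgK.
    by case: w hw {rw} => [|c' w] /= => [_|->]; rewrite eb ec.
  by case: w hw {rw} => [|c' w] /= => [_|->].
rewrite prjK !mulgA.
case: (eqVneq (a * b) 1) => ab //.
by rewrite -mulgA ab mulg1 (negbTE d1) ec.
Qed.

Lemma mulw_red a w : reduced (inj a :: w) -> mulw a w = inj a :: w.
Proof using prjK prjS ntinj sside.
rewrite /= ntinj /mulw => /and3P [a1 ns _]; rewrite (negbTE a1).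
case: w ns => [|c w] //=; rewrite sside.
by case: (prj c).
Qed.

Lemma mulw_one w : mulw 1 w = w.
Proof. by rewrite /mulw eqxx. Qed.

Lemma pi_step s w :
  exists p0, pi prj p0 (mulw s w) = pi prj p0 w * s /\
             forall p, p != p0 -> pi prj p (mulw s w) = pi prj p w.
Proof using prjK prjS ntinj sside.
rewrite /mulw; case: eqP => [->|/eqP s1].
  by exists [::]; rewrite mulg1.
have gen : exists p0, pi prj p0 (inj s :: w) = pi prj p0 w * s /\
             forall p, p != p0 -> pi prj p (inj s :: w) = pi prj p w.
  exists w; split; first by rewrite /= eqxx prjK pi_self mul1g.
  by move=> p ne /=; rewrite eq_sym (negbTE ne).
case: w gen => [|c w] gen //.
case E: (prj c) => [b|]; last exact: gen.
exists w; case: eqP => [/eqP bs|_].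
  split; first by rewrite pi_self /= eqxx E (eqP bs).
  by move=> p ne /=; rewrite eq_sym (negbTE ne).
split; first by rewrite /= !eqxx prjK E.
by move=> p ne /=; rewrite eq_sym (negbTE ne).
Qed.

Lemma pi_other (H' : groupType) (prj' : letter G1 G2 -> option H')
  (hno : forall a, prj' (inj a) = None) s w p :
  pi prj' p (mulw s w) = pi prj' p w.
Proof using prjK prjS ntinj sside.
rewrite /mulw; case: eqP => // _.
case: w => [|c w]; first by rewrite pi_cons_none.
case E: (prj c) => [b|]; last by rewrite pi_cons_none.
rewrite (prjS E) pi_cons_none //.
by case: eqP => _ //; rewrite pi_cons_none.
Qed.

Lemma size_mulw s w : (size (mulw s w) <= (size w).+1)%N.
Proof.
rewrite /mulw; case: eqP => // _; case: w => [|c w] //.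
case: (prj c) => [b|] //; case: eqP => _ /=; first by rewrite -addn2 leq_addr.
by rewrite ltnS leqnSn.
Qed.
End Generic.

Section NF.
Local Open Scope group_scope.
Variables (G1 G2 G : groupType) (i1 : G1 -> G) (i2 : G2 -> G).
Hypothesis hG : is_free_product i1 i2.

Notation L := (letter G1 G2).
Definition inj1 (a : G1) : L := inl a.
Definition inj2 (a : G2) : L := inr a.

Lemma prj1K a : prj1 (inj1 a) = Some a. Proof. by []. Qed.
Lemma prj2K a : prj2 (inj2 a) = Some a. Proof. by []. Qed.
Lemma prj1S l a : prj1 l = Some a -> l = inj1 a. Proof. by case: l => //= x [->]. Qed.
Lemma prj2S l a : prj2 l = Some a -> l = inj2 a. Proof. by case: l => //= x [->]. Qed.
Lemma ntinj1 a : nontriv (inj1 a) = (a != 1). Proof. by []. Qed.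
Lemma ntinj2 a : nontriv (inj2 a) = (a != 1). Proof. by []. Qed.
Lemma sside1 a l : sameside (inj1 a) l = (prj1 l != None). Proof. by case: l. Qed.
Lemma sside2 a l : sameside (inj2 a) l = (prj2 l != None). Proof. by case: l. Qed.
Lemma prj21 a : prj2 (inj1 a) = None. Proof. by []. Qed.
Lemma prj12 a : prj1 (inj2 a) = None. Proof. by []. Qed.

Definition mulw1 := mulw inj1 prj1.
Definition mulw2 := mulw inj2 prj2.

Definition ev (l : L) : G := match l with inl a => i1 a | inr b => i2 b end.
Fixpoint psi (w : seq L) : G := if w is c :: w' then psi w' * ev c else 1.

Lemma i1m : monoid.monoid_morphism i1. Proof. by case: hG. Qed.
Lemma i2m : monoid.monoid_morphism i2. Proof. by case: hG => _ []. Qed.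

Lemma psi_mulw1 a w : psi (mulw1 a w) = psi w * i1 a.
Proof.
have [m1 mM] := i1m.
rewrite /mulw1 /mulw; case: eqP => [->|_]; first by rewrite m1 mulg1.
case: w => [|c w] /=; first by [].
case: c => [b|b] //=.
case: eqP => [e|_] /=; last by rewrite mM mulgA.
by rewrite -mulgA -mM e m1 mulg1.
Qed.

Lemma psi_mulw2 a w : psi (mulw2 a w) = psi w * i2 a.
Proof.
have [m1 mM] := i2m.
rewrite /mulw2 /mulw; case: eqP => [->|_]; first by rewrite m1 mulg1.
case: w => [|c w] /=; first by [].
case: c => [b|b] //=.
case: eqP => [e|_] /=; last by rewrite mM mulgA.
by rewrite -mulgA -mM e m1 mulg1.
Qed.

Definition X := {w : seq L | reduced w}.

Definition R1 (a : G1) (x : X) : X :=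
  exist _ (mulw1 a (val x)) (reduced_mulw prj1K prj1S ntinj1 sside1 a (valP x)).
Definition R2 (a : G2) (x : X) : X :=
  exist _ (mulw2 a (val x)) (reduced_mulw prj2K prj2S ntinj2 sside2 a (valP x)).

Lemma R1M a b x : R1 (a * b) x = R1 b (R1 a x).
Proof. apply: val_inj => /=; exact: (mulwM prj1K prj1S ntinj1 sside1 a b (valP x)). Qed.
Lemma R2M a b x : R2 (a * b) x = R2 b (R2 a x).
Proof. apply: val_inj => /=; exact: (mulwM prj2K prj2S ntinj2 sside2 a b (valP x)). Qed.
Lemma R11 x : R1 1 x = x.
Proof. by apply: val_inj; rewrite /= /mulw1 mulw_one. Qed.
Lemma R21 x : R2 1 x = x.
Proof. by apply: val_inj; rewrite /= /mulw2 mulw_one. Qed.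

Lemma R1K a : cancel (R1 a) (R1 a^-1).
Proof. by move=> x; rewrite -R1M mulgV R11. Qed.
Lemma R1KV a : cancel (R1 a^-1) (R1 a).
Proof. by move=> x; rewrite -R1M mulVg R11. Qed.
Lemma R2K a : cancel (R2 a) (R2 a^-1).
Proof. by move=> x; rewrite -R2M mulgV R21. Qed.
Lemma R2KV a : cancel (R2 a^-1) (R2 a).
Proof. by move=> x; rewrite -R2M mulVg R21. Qed.

Definition P1 a : xperm X := XPerm (R1K a) (R1KV a).
Definition P2 a : xperm X := XPerm (R2K a) (R2KV a).

Lemma P1m : monoid.monoid_morphism P1.
Proof.
split; first by apply: xperm_eq => x /=; rewrite R11.
by move=> a b; apply: xperm_eq => x /=; rewrite R1M.
Qed.
Lemma P2m : monoid.monoid_morphism P2.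
Proof.
split; first by apply: xperm_eq => x /=; rewrite R21.
by move=> a b; apply: xperm_eq => x /=; rewrite R2M.
Qed.

Lemma phi_exists : exists phi : G -> xperm X, monoid.monoid_morphism phi /\
  (forall a, phi (i1 a) = P1 a) /\ (forall b, phi (i2 b) = P2 b).
Proof.
have [_ [_ U]] := hG.
by case: (U _ P1 P2 P1m P2m) => f [H _]; exists f.
Qed.

Definition phi := projT1 (cid phi_exists).
Lemma phiP : monoid.monoid_morphism phi /\
  (forall a, phi (i1 a) = P1 a) /\ (forall b, phi (i2 b) = P2 b).
Proof. exact: (projT2 (cid phi_exists)). Qed.

Lemma phi1 x : pf (phi 1) x = x.
Proof. by case: phiP => [[-> _] _]. Qed.
Lemma phiM g h x : pf (phi (g * h)) x = pf (phi h) (pf (phi g) x).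
Proof. by case: phiP => [[_ ->] _]. Qed.
Lemma phii1 a x : pf (phi (i1 a)) x = R1 a x.
Proof. by case: phiP => _ [-> _]. Qed.
Lemma phii2 a x : pf (phi (i2 a)) x = R2 a x.
Proof. by case: phiP => _ [_ ->]. Qed.

Lemma Fg_K g : cancel (fun xy : X * G => (pf (phi g) xy.1, xy.2 * g))
                      (fun xy : X * G => (pinv (phi g) xy.1, xy.2 * g^-1)).
Proof. by case=> x y /=; rewrite pK mulgK. Qed.
Lemma Fg_KV g : cancel (fun xy : X * G => (pinv (phi g) xy.1, xy.2 * g^-1))
                       (fun xy : X * G => (pf (phi g) xy.1, xy.2 * g)).
Proof. by case=> x y /=; rewrite pKV mulgVK. Qed.
Definition Fg g : xperm (X * G) := XPerm (Fg_K g) (Fg_KV g).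

Definition psiX (x : X) := psi (val x).
Lemma Ft_K g : cancel
  (fun xy : X * G => (pf (phi g) xy.1, xy.2 * (psiX xy.1)^-1 * psiX (pf (phi g) xy.1)))
  (fun xy : X * G => (pinv (phi g) xy.1, xy.2 * (psiX xy.1)^-1 * psiX (pinv (phi g) xy.1))).
Proof. by case=> x y /=; rewrite pK mulgK mulgVK. Qed.
Lemma Ft_KV g : cancel
  (fun xy : X * G => (pinv (phi g) xy.1, xy.2 * (psiX xy.1)^-1 * psiX (pinv (phi g) xy.1)))
  (fun xy : X * G => (pf (phi g) xy.1, xy.2 * (psiX xy.1)^-1 * psiX (pf (phi g) xy.1))).
Proof. by case=> x y /=; rewrite pKV mulgK mulgVK. Qed.
Definition Ft g : xperm (X * G) := XPerm (Ft_K g) (Ft_KV g).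

Lemma Fgm : monoid.monoid_morphism Fg.
Proof.
split; first by apply: xperm_eq => -[x y] /=; rewrite phi1 mulg1.
by move=> g h; apply: xperm_eq => -[x y] /=; rewrite phiM mulgA.
Qed.
Lemma Ftm : monoid.monoid_morphism Ft.
Proof.
split; first by apply: xperm_eq => -[x y] /=; rewrite phi1 mulgVK.
move=> g h; apply: xperm_eq => -[x y] /=; rewrite phiM.
by rewrite mulgK.
Qed.

Lemma comp_morph (A B C : groupType) (f : A -> B) (g : B -> C) :
  monoid.monoid_morphism f -> monoid.monoid_morphism g -> monoid.monoid_morphism (g \o f).
Proof.
move=> [f1 fM] [g1 gM]; split; first by rewrite /= f1 g1.
by move=> x y /=; rewrite fM gM.
Qed.

Lemma Fg_Ft : Fg = Ft.
Proof.
have [m1 [m2 U]] := hG.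
case: (U _ (Fg \o i1) (Fg \o i2) (comp_morph m1 Fgm) (comp_morph m2 Fgm)) => f [_ uf].
have e1 : f = Fg by apply: uf; split; [exact: Fgm | split=> //].
rewrite e1 in uf; apply: uf; split; first exact: Ftm.
split=> a /=; apply: xperm_eq => -[x y] /=.
  by rewrite /psiX !phii1 /= psi_mulw1 mulgA mulgVK.
by rewrite /psiX !phii2 /= psi_mulw2 mulgA mulgVK.
Qed.

Lemma psi_phi g x : psiX (pf (phi g) x) = psiX x * g.
Proof.
have := congr1 (fun F => (pf (F g) (x, 1)).2) Fg_Ft => /=.
by rewrite !mul1g => e; rewrite {2}e mulVKg.
Qed.

Definition x0 : X := exist _ [::] erefl.
Definition nf (g : G) : seq L := val (pf (phi g) x0).

Lemma nf_red g : reduced (nf g). Proof. exact: valP. Qed.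
Lemma psi_nf g : psi (nf g) = g.
Proof. by have := psi_phi g x0; rewrite /psiX /= mul1g. Qed.
Lemma nf_mul1 g a : nf (g * i1 a) = mulw1 a (nf g).
Proof. by rewrite /nf phiM phii1. Qed.
Lemma nf_mul2 g a : nf (g * i2 a) = mulw2 a (nf g).
Proof. by rewrite /nf phiM phii2. Qed.
Lemma nf1 : nf 1 = [::].
Proof. by rewrite /nf phi1. Qed.

Lemma nf_psi w : reduced w -> nf (psi w) = w.
Proof.
elim: w => [|c w IH] /=; first by rewrite nf1.
move=> r; have rw := reduced_cons r.
case: c r => a r /=.
  by rewrite nf_mul1 IH // /mulw1 (mulw_red prj1K prj1S ntinj1 sside1).
by rewrite nf_mul2 IH // /mulw2 (mulw_red prj2K prj2S ntinj2 sside2).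
Qed.

Lemma psi_inj w w' : reduced w -> reduced w' -> psi w = psi w' -> w = w'.
Proof. by move=> r r' e; rewrite -(nf_psi r) -(nf_psi r') e. Qed.

Lemma i1_inj : injective i1.
Proof.
move=> a b e; have := congr1 nf e.
rewrite -(mul1g (i1 a)) -(mul1g (i1 b)) !nf_mul1 nf1 /mulw1 /mulw.
case: eqP => [->|a1]; case: eqP => [->|b1] //; by case.
Qed.
Lemma i2_inj : injective i2.
Proof.
move=> a b e; have := congr1 nf e.
rewrite -(mul1g (i2 a)) -(mul1g (i2 b)) !nf_mul2 nf1 /mulw2 /mulw.
case: eqP => [->|a1]; case: eqP => [->|b1] //; by case.
Qed.
End NF.

Lemma big_sub_zero (I : eqType) (R : Type) (idx : R) (op : Monoid.com_law idx)
  (L K : seq I) (F : I -> R) :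
  uniq L -> uniq K -> {subset K <= L} -> (forall p, p \notin K -> F p = idx) ->
  \big[op/idx]_(p <- L) F p = \big[op/idx]_(p <- K) F p.
Proof.
move=> uL uK sub F0.
have pe : perm_eq [seq p <- L | p \in K] K.
  apply: uniq_perm; [exact: filter_uniq | exact: uK |].
  by move=> p; rewrite mem_filter; case: (boolP (p \in K)) => // /sub ->.
rewrite -(perm_big _ pe) big_filter.
rewrite [RHS]big_mkcond; apply: eq_bigr => p _.
by case: ifP => // /negbT /F0.
Qed.

Lemma big_only (I : eqType) (R : Type) (idx : R) (op : Monoid.com_law idx)
  (L : seq I) (F : I -> R) p0 :
  uniq L -> (forall p, p != p0 -> F p = idx) ->
  \big[op/idx]_(p <- L) F p = if p0 \in L then F p0 else idx.
Proof.
move=> uL F0; case: ifP => inL.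
  rewrite (@big_sub_zero _ _ _ _ L [:: p0]) ?big_seq1 //.
  - by move=> p; rewrite inE => /eqP ->.
  - by move=> p; rewrite inE; exact: F0.
elim: L inL {uL} => [|q L IH]; first by rewrite big_nil.
rewrite inE big_cons => /norP [nq nL]; rewrite F0 1?eq_sym // Monoid.mul1m.
exact: IH (negbTE nL).

Qed.

Lemma morphV (A B : groupType) (f : A -> B) : monoid.monoid_morphism f ->
  forall x, f (x^-1)%g = ((f x)^-1)%g.
Proof.
move=> [f1 fM] x; apply/esym/mulg1_eq; by rewrite -fM mulgV f1.
Qed.

Section Dist.
Local Open Scope group_scope.
Variables (G1 G2 G : groupType) (i1 : G1 -> G) (i2 : G2 -> G).
Hypothesis hG : is_free_product i1 i2.
Variables (S1 : G1 -> Prop) (S2 : G2 -> Prop).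
Hypotheses (hS1 : generates S1) (hS2 : generates S2).
Definition SS := (fun g : G => (exists s, S1 s /\ g = i1 s) \/ (exists s, S2 s /\ g = i2 s)).

Notation W := (seq (letter G1 G2)).
Definition pi1 (p x : W) : G1 := pi prj1 p x.
Definition pi2 (p x : W) : G2 := pi prj2 p x.
Definition blk (p x y : W) : nat :=
  (cay_dist S1 (pi1 p x) (pi1 p y) + cay_dist S2 (pi2 p x) (pi2 p y))%N.
Definition DL (L : seq W) x y := (\sum_(p <- L) blk p x y)%N.
Definition DD x y := DL (undup (ptails x ++ ptails y)) x y.

Lemma blk0 p x y : p \notin ptails x ++ ptails y -> blk p x y = 0%N.
Proof.
rewrite mem_cat negb_or => /andP [nx ny].
by rewrite /blk /pi1 /pi2 !pi_notin // !dist_self.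
Qed.

Lemma DL_DD L x y : uniq L -> {subset ptails x ++ ptails y <= L} -> DL L x y = DD x y.
Proof.
move=> uL sub; rewrite /DL /DD (@big_sub_zero _ _ _ _ L (undup (ptails x ++ ptails y))) //.
- exact: undup_uniq.
- by move=> p; rewrite mem_undup; exact: sub.
- by move=> p; rewrite mem_undup; exact: blk0.
Qed.

Lemma DL_tri L x y z : (DL L x z <= DL L x y + DL L y z)%N.
Proof.
rewrite /DL -big_split /=; apply: leq_sum => p _; rewrite /blk.
rewrite addnACA; apply: leq_add; exact: dist_tri.
Qed.

Lemma DD_sym x y : DD x y = DD y x.
Proof.
have e : DD y x = DL (undup (ptails x ++ ptails y)) y x.
  by rewrite DL_DD ?undup_uniq // => p; rewrite mem_undup !mem_cat orbC.
rewrite e /DD /DL; apply: eq_bigr => p _.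
by rewrite /blk dist_sym [X in (_ + X)%N]dist_sym.
Qed.

Lemma sum_le_one (L : seq W) (F : W -> nat) p0 :
  uniq L -> (forall p, p != p0 -> F p = 0%N) -> (F p0 <= 1)%N -> (\sum_(p <- L) F p <= 1)%N.
Proof. by move=> uL F0 F1; rewrite (@big_only _ _ _ _ L F p0 uL F0); case: ifP. Qed.

Notation K1 := (@prj1K G1 G2). Notation K2 := (@prj2K G1 G2).
Notation PS1 := (@prj1S G1 G2). Notation PS2 := (@prj2S G1 G2).
Notation N1 := (@ntinj1 G1 G2). Notation N2 := (@ntinj2 G1 G2).
Notation SD1 := (@sside1 G1 G2). Notation SD2 := (@sside2 G1 G2).
Notation O21 := (@prj21 G1 G2). Notation O12 := (@prj12 G1 G2).

Lemma step1 L w s : uniq L -> (forall g, cay_dist S1 g (g * s) <= 1)%N ->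
  (DL L w (mulw1 s w) <= 1)%N.
Proof.
move=> uL ds.
have [p0 [e1 e2]] := pi_step K1 PS1 N1 SD1 s w.
apply: (sum_le_one (p0 := p0) uL).
  move=> p ne; rewrite /blk /pi1 /pi2 /mulw1 e2 //.
  by rewrite (pi_other K1 PS1 N1 SD1 O21) !dist_self.
by rewrite /blk /pi1 /pi2 /mulw1 e1 (pi_other K1 PS1 N1 SD1 O21) dist_self addn0.
Qed.

Lemma step2 L w s : uniq L -> (forall g, cay_dist S2 g (g * s) <= 1)%N ->
  (DL L w (mulw2 s w) <= 1)%N.
Proof.
move=> uL ds.
have [p0 [e1 e2]] := pi_step K2 PS2 N2 SD2 s w.
apply: (sum_le_one (p0 := p0) uL).
  move=> p ne; rewrite /blk /pi1 /pi2 /mulw2 e2 //.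
  by rewrite (pi_other K2 PS2 N2 SD2 O12) !dist_self.
by rewrite /blk /pi1 /pi2 /mulw2 e1 (pi_other K2 PS2 N2 SD2 O12) dist_self add0n; exact: ds.
Qed.

Lemma DD_self x : DD x x = 0%N.
Proof. by rewrite /DD /DL big1 // => p _; rewrite /blk !dist_self. Qed.

Lemma DD_edge g z : cay_adj SS g z -> (DD (nf hG g) (nf hG z) <= 1)%N.
Proof.
case=> _ [t [[[s [Ss ->]]|[s [Ss ->]]] E]]; rewrite /DD.
- case: E => ->.
    rewrite nf_mul1; apply: step1; first exact: undup_uniq.
    by move=> u; case: (dist_step u Ss).
  rewrite -(morphV (i1m hG)) nf_mul1; apply: step1; first exact: undup_uniq.
  by move=> u; case: (dist_step u Ss).
- case: E => ->.
    rewrite nf_mul2; apply: step2; first exact: undup_uniq.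
    by move=> u; case: (dist_step u Ss).
  rewrite -(morphV (i2m hG)) nf_mul2; apply: step2; first exact: undup_uniq.
  by move=> u; case: (dist_step u Ss).
Qed.

Lemma lower g h n : cay_walk_len SS g h n -> (DD (nf hG g) (nf hG h) <= n)%N.
Proof.
elim: n g => [|n IH] g.
  by case=> p [sp [_ lp]]; case: p sp lp => [|//] _ /= <-; rewrite DD_self.
move=> /walk_len_consE [z [a w]].
set L := undup (ptails (nf hG g) ++ ptails (nf hG z) ++ ptails (nf hG h)).
have uL : uniq L by exact: undup_uniq.
have e1 : DL L (nf hG g) (nf hG h) = DD (nf hG g) (nf hG h).
  by apply: DL_DD => // p; rewrite mem_undup !mem_cat => /orP [->|->]; rewrite ?orbT.
have e2 : DL L (nf hG g) (nf hG z) = DD (nf hG g) (nf hG z).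
  by apply: DL_DD => // p; rewrite mem_undup !mem_cat => /orP [->|->]; rewrite ?orbT.
have e3 : DL L (nf hG z) (nf hG h) = DD (nf hG z) (nf hG h).
  by apply: DL_DD => // p; rewrite mem_undup !mem_cat => /orP [->|->]; rewrite ?orbT.
rewrite -e1 -add1n; apply: leq_trans (DL_tri L _ (nf hG z) _) _.
by rewrite e2 e3; apply: leq_add; [exact: DD_edge | exact: IH].
Qed.

Lemma pi_some (H : groupType) (prj : letter G1 G2 -> option H) p y :
  pi prj p y != 1 -> exists u c, y = u ++ c :: p /\ prj c = Some (pi prj p y).
Proof.
elim: y => [|c y IH] /=; first by rewrite eqxx.
case: (eqVneq y p) => [->|_].
  case E: (prj c) => [a|]; last by rewrite eqxx.
  by move=> _; exists [::], c.
by move/IH => [u [c' [-> e]]]; exists (c :: u), c'.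
Qed.

Lemma tr1 c a b n : cay_walk_len S1 a b n -> cay_walk_len SS (c * i1 a) (c * i1 b) n.
Proof.
apply: (@walk_len_map _ _ S1 SS (fun u => c * i1 u)).
  by move=> u v /mulgI /(i1_inj hG).
move=> u s Ss; exists (i1 s); split; first by left; exists s.
have [_ mM] := i1m hG.
by rewrite !mM (morphV (i1m hG)) !mulgA.
Qed.

Lemma tr2 c a b n : cay_walk_len S2 a b n -> cay_walk_len SS (c * i2 a) (c * i2 b) n.
Proof.
apply: (@walk_len_map _ _ S2 SS (fun u => c * i2 u)).
  by move=> u v /mulgI /(i2_inj hG).
move=> u s Ss; exists (i2 s); split; first by right; exists s.
have [_ mM] := i2m hG.
by rewrite !mM (morphV (i2m hG)) !mulgA.
Qed.

Lemma walk_d1 a b : cay_walk_len S1 a b (cay_dist S1 a b).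
Proof. exact: (proj1 (dist_spec (connected_of_gen hS1 a b))). Qed.
Lemma walk_d2 a b : cay_walk_len S2 a b (cay_dist S2 a b).
Proof. exact: (proj1 (dist_spec (connected_of_gen hS2 a b))). Qed.

Lemma DL_split L q x y : uniq L -> q \in L ->
  DL L x y = (blk q x y + \sum_(p <- L | p != q) blk p x y)%N.
Proof. by move=> uL qL; rewrite /DL (bigD1_seq q qL uL). Qed.

Lemma rest_eq c x' y L : (\sum_(p <- L | p != x') blk p (c :: x') y =
  \sum_(p <- L | p != x') blk p x' y)%N.
Proof.
apply: eq_bigr => p ne; rewrite /blk /pi1 /pi2 /=.
by rewrite eq_sym (negbTE ne).
Qed.

Lemma upper n : forall x y, reduced x -> reduced y -> (size x + size y <= n)%N ->
  exists m, (m <= DD x y)%N /\ cay_walk_len SS (psi i1 i2 x) (psi i1 i2 y) m.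
Proof.
elim: n => [|n IH] x y rx ry.
  case: x rx => // _; case: y ry => // _ _.
  by exists 0%N; split=> //; exact: walk_len0.
wlog le: x y rx ry / (size y <= size x)%N.
  move=> WL sz; case: (leqP (size y) (size x)) => h; first exact: WL.
  have sz' : (size y + size x <= n.+1)%N by rewrite addnC.
  have [m [le w]] := WL y x ry rx (ltnW h) sz'.
  by exists m; split; [rewrite DD_sym | exact: walk_len_sym].
move=> sz.
case: x rx le sz => [|c x'] rx le sz.
  case: y ry le sz => // _ _ _; exists 0%N; split => //; exact: walk_len0.
have rx' := reduced_cons rx.
have sz' : (size x' + size y <= n)%N by move: sz; rewrite addSn.
have [m' [le' w']] := IH x' y rx' ry sz'.
set L := undup (ptails (c :: x') ++ ptails y).
have uL : uniq L by exact: undup_uniq.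
have x'L : x' \in L by rewrite mem_undup /= inE eqxx.
have eDx' : DD x' y = DL L x' y.
  by rewrite DL_DD // => p; rewrite mem_undup !mem_cat /= inE => /orP [->|->]; rewrite ?orbT.
rewrite /DD -/L (DL_split _ _ uL x'L) rest_eq.
rewrite eDx' (DL_split _ _ uL x'L) in le'.
set R := (\sum_(p <- L | p != x') blk p x' y)%N in le' *.
clearbody L; case: c rx le {sz} => a rx le.
- have blkx : blk x' (inl a :: x') y = (cay_dist S1 a (pi1 x' y) + cay_dist S2 1 (pi2 x' y))%N.
    by rewrite /blk /pi1 /pi2 /= eqxx.
  have blkx' : blk x' x' y = (cay_dist S1 1 (pi1 x' y) + cay_dist S2 1 (pi2 x' y))%N.
    by rewrite /blk /pi1 /pi2 !pi_self.
  rewrite blkx; rewrite blkx' in le'.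
  case: (eqVneq (pi1 x' y) 1) => b1.
    exists (cay_dist S1 a 1 + m')%N; split.
      by rewrite b1 -addnA leq_add2l; rewrite b1 dist_self add0n in le'.
    apply: walk_len_trans w'.
    have := tr1 (psi i1 i2 x') (walk_d1 a 1).
    by have [-> _] := i1m hG; rewrite mulg1.
  have [u [c [ey ec]]] := pi_some b1.
  have u0 : u = [::].
    move: le; rewrite ey size_cat /= => /leq_trans; move/(_ _ (leqnn _)).
    by case: u {ey} => //= ? ?; rewrite addSn ltnNge leq_addl.
  rewrite u0 /= in ey; case: c ey ec => // b ey _; rewrite ey.
  exists (cay_dist S1 a b); split.
    by rewrite /pi1 /= eqxx /= -addnA leq_addr.
  by apply: tr1; exact: walk_d1.
- have blkx : blk x' (inr a :: x') y = (cay_dist S1 1 (pi1 x' y) + cay_dist S2 a (pi2 x' y))%N.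
    by rewrite /blk /pi1 /pi2 /= eqxx.
  have blkx' : blk x' x' y = (cay_dist S1 1 (pi1 x' y) + cay_dist S2 1 (pi2 x' y))%N.
    by rewrite /blk /pi1 /pi2 !pi_self.
  rewrite blkx; rewrite blkx' in le'.
  case: (eqVneq (pi2 x' y) 1) => b1.
    exists (cay_dist S2 a 1 + m')%N; split.
      rewrite b1; rewrite b1 dist_self addn0 in le'.
      rewrite [X in (X + R)%N]addnC -addnA leq_add2l; exact: le'.
    apply: walk_len_trans w'.
    have := tr2 (psi i1 i2 x') (walk_d2 a 1).
    by have [-> _] := i2m hG; rewrite mulg1.
  have [u [c [ey ec]]] := pi_some b1.
  have u0 : u = [::].
    move: le; rewrite ey size_cat /= => /leq_trans; move/(_ _ (leqnn _)).
    by case: u {ey} => //= ? ?; rewrite addSn ltnNge leq_addl.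
  rewrite u0 /= in ey; case: c ey ec => // b ey _; rewrite ey.
  exists (cay_dist S2 a b); split.
    by rewrite /pi2 /= eqxx /= -addnA addnCA leq_addr.
  by apply: tr2; exact: walk_d2.
Qed.

Lemma dist_formula g h : cay_dist SS g h = DD (nf hG g) (nf hG h).
Proof.
have [m [le w]] := @upper _ (nf hG g) (nf hG h) (nf_red hG g) (nf_red hG h) (leqnn _).
rewrite !psi_nf in w.
have [wd md] := dist_spec (ex_intro _ m w).
apply/eqP; rewrite eqn_leq (leq_trans (md _ w) le) /=.
exact: lower wd.
Qed.
End Dist.

Local Open Scope ring_scope.

Lemma partition_seq (T U : eqType) (R : Type) (idx : R) (op : Monoid.com_law idx)
  (f : T -> U) (s : seq T) (F : T -> R) :
  \big[op/idx]_(x <- s) F x =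
  \big[op/idx]_(a <- undup (map f s)) \big[op/idx]_(x <- s | f x == a) F x.
Proof.
under [RHS]eq_bigr => a _ do rewrite big_mkcond.
rewrite exchange_big /=; rewrite [LHS]big_seq [RHS]big_seq.
apply: eq_bigr => x xs.
rewrite (@big_only _ _ _ _ _ (fun a => if f x == a then F x else idx) (f x)).
- by rewrite mem_undup map_f // eqxx.
- exact: undup_uniq.
- by move=> a ne; rewrite eq_sym (negbTE ne).
Qed.

Definition mu (T U : eqType) (f : T -> U) (lam : T -> CC) (s : seq T) (a : U) : CC :=
  \sum_(x <- s | f x == a) lam x.

Lemma push_lin (T U : eqType) (f : T -> U) (lam : T -> CC) (s : seq T) (H : U -> CC) :
  \sum_(x <- s) lam x * H (f x) = \sum_(a <- undup (map f s)) mu f lam s a * H a.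
Proof.
rewrite (partition_seq _ f); apply: eq_bigr => a _.
rewrite /mu mulr_suml; apply: eq_bigr => x /eqP -> //.
Qed.

Lemma mu_conj (T U : eqType) (f : T -> U) (lam : T -> CC) s a :
  mu f (fun x => (lam x)^*) s a = (mu f lam s a)^*.
Proof. by rewrite /mu rmorph_sum. Qed.

Lemma push_quad (T U : eqType) (f : T -> U) (lam : T -> CC) (s : seq T) (K : U -> U -> CC) :
  \sum_(x <- s) \sum_(y <- s) lam x * (lam y)^* * K (f x) (f y) =
  \sum_(a <- undup (map f s)) \sum_(b <- undup (map f s))
     mu f lam s a * (mu f lam s b)^* * K a b.
Proof.
under eq_bigr => x _ do under eq_bigr => y _ do rewrite -mulrA.
under eq_bigr => x _ do rewrite -mulr_sumr (push_lin f (fun y => (lam y)^*) s (K (f x))).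
rewrite (push_lin f lam s (fun a => \sum_(b <- undup [seq f i | i <- s]) mu f (fun y => (lam y)^*) s b * K a b)).
apply: eq_bigr => a _; rewrite mulr_sumr; apply: eq_bigr => b _.
by rewrite mu_conj mulrA.
Qed.

Lemma mu_sum (T U : eqType) (f : T -> U) (lam : T -> CC) (s : seq T) :
  \sum_(a <- undup (map f s)) mu f lam s a = \sum_(x <- s) lam x.
Proof.
symmetry; rewrite (eq_bigr (fun x => lam x * 1)); last by move=> x _; rewrite mulr1.
by rewrite (push_lin f lam s (fun _ => 1)); apply: eq_bigr => a _; rewrite mulr1.
Qed.

Lemma mu_out (T U : eqType) (f : T -> U) (lam : T -> CC) (s : seq T) a :
  a \notin undup (map f s) -> mu f lam s a = 0.
Proof.
rewrite mem_undup => na; rewrite /mu big_seq_cond big_pred0 // => x.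
apply/negP => /andP [xs /eqP fx]; move: na; by rewrite -fx map_f.
Qed.

Lemma cnd_le (T : eqType) (K : T -> T -> Rdefinitions.R) (h : cond_strict_neg_def K)
  (m : T -> CC) (s : seq T) : uniq s -> (forall x, x \notin s -> m x = 0) ->
  \sum_(x <- s) m x = 0 ->
  \sum_(x <- s) \sum_(y <- s) m x * (m y)^* * real_complex Rdefinitions.R (K x y) <= 0.
Proof.
move=> us out s0; case: (pselect (exists x, m x != 0)) => ex.
  by apply: ltW; apply: (proj2 h).
rewrite big1 // => x _; rewrite big1 // => y _.
have -> : m x = 0 by apply/eqP; apply/negPn/negP => ne; apply: ex; exists x.
by rewrite !mul0r.
Qed.

Local Open Scope ring_scope.

Lemma seq_argmax (T : eqType) (s : seq T) (g : T -> nat) x0 : x0 \in s ->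
  exists x, x \in s /\ forall y, y \in s -> (g y <= g x)%N.
Proof.
elim: s x0 => [//|z s IH] x0 _.
case: (boolP (s == [::])) => [/eqP ->|ne].
  by exists z; split; rewrite ?inE ?eqxx // => y; rewrite inE => /eqP ->.
case: s ne IH => [//|z' s] _ IH.
have [x [xs mx]] := IH z' (mem_head z' s).
case: (leqP (g z) (g x)) => h.
  exists x; split; first by rewrite inE xs orbT.
  by move=> y; rewrite inE => /orP [/eqP ->|]; [| exact: mx].
exists z; split; first by rewrite inE eqxx.
move=> y; rewrite inE => /orP [/eqP ->//|/mx le]; exact: leq_trans le (ltnW h).
Qed.

Section Main.
Variables (G1 G2 G : groupType) (i1 : G1 -> G) (i2 : G2 -> G).
Hypothesis hG : is_free_product i1 i2.

Lemma nf_inj : injective (nf hG).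
Proof. by move=> x y e; rewrite -(psi_nf hG x) -(psi_nf hG y) e. Qed.

Lemma mu_max (H : groupType) (inj : H -> letter G1 G2) (prj : letter G1 G2 -> option H)
  (prjS : forall l a, prj l = Some a -> l = inj a)
  (ntinj : forall a, nontriv (inj a) = (a != 1%g))
  (lam : G -> CC) (supp : seq G) x c p a :
  (forall y, y \notin supp -> lam y = 0) ->
  x \in supp -> nf hG x = c :: p -> prj c = Some a ->
  (forall y, y \in supp -> lam y != 0 -> (size (nf hG y) <= size (nf hG x))%N) ->
  uniq supp ->
  mu (fun y => pi prj p (nf hG y)) lam supp a = lam x.
Proof.
move=> out xs ex ec mx us.
have a1 : a != 1%g.
  by have := nf_red hG x; rewrite ex (prjS _ _ ec) /= ntinj => /and3P [].
rewrite /mu big_mkcond (@big_only _ _ _ _ _ _ x) //.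
  by rewrite xs ex /= eqxx ec eqxx.
move=> y ne.
case: (eqVneq (lam y) 0) => [->|ly]; first by case: ifP.
have ys : y \in supp by apply: contraTT ly => /out ->; rewrite eqxx.
case: eqP => // ep.
have : pi prj p (nf hG y) != 1%g by rewrite ep.
move=> /pi_some [u [c' [ey ec']]].
rewrite ep in ec'.
have := mx y ys ly; rewrite ey ex size_cat /=.
case: u ey => [|d u] /= ey.
  move=> _; move: ne; have -> : y = x; last by rewrite eqxx.
  by apply: nf_inj; rewrite ey ex (prjS _ _ ec) (prjS _ _ ec').
by rewrite addSn ltnNge leq_addl.
Qed.
End Main.

Local Open Scope ring_scope.

Theorem mainTheorem10
  (G1 G2 : groupType) (S1 : G1 -> Prop) (S2 : G2 -> Prop)
  (hS1 : generates S1) (hS2 : generates S2)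
  (h1 : cond_strict_neg_def (cay_metric S1))
  (h2 : cond_strict_neg_def (cay_metric S2))
  (G : groupType) (i1 : G1 -> G) (i2 : G2 -> G)
  (hG : is_free_product i1 i2) :
  cond_strict_neg_def
    (cay_metric (fun g : G => (exists s, S1 s /\ g = i1 s) \/ (exists s, S2 s /\ g = i2 s))).
Proof.
change (cond_strict_neg_def (cay_metric (SS i1 i2 S1 S2))).
split; first by move=> x y; rewrite /cay_metric dist_sym.
move=> lam supp us out [x0 nz0] s0.
set nfG := nf hG.
set L := undup (flatten (map (fun x => ptails (nfG x)) supp)).
have uL : uniq L by exact: undup_uniq.
set f1 := fun p x => pi1 p (nfG x).
set f2 := fun p x => pi2 p (nfG x).
set K1 := fun a b => real_complex Rdefinitions.R (cay_metric S1 a b).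
set K2 := fun a b => real_complex Rdefinitions.R (cay_metric S2 a b).
set T1 := fun p => \sum_(x <- supp) \sum_(y <- supp) lam x * (lam y)^* * K1 (f1 p x) (f1 p y).
set T2 := fun p => \sum_(x <- supp) \sum_(y <- supp) lam x * (lam y)^* * K2 (f2 p x) (f2 p y).
have eQ : \sum_(x <- supp) \sum_(y <- supp) lam x * (lam y)^* *
     real_complex Rdefinitions.R (cay_metric (SS i1 i2 S1 S2) x y) =
   \sum_(p <- L) (T1 p + T2 p).
  transitivity (\sum_(x <- supp) \sum_(y <- supp) lam x * (lam y)^* *
     \sum_(p <- L) (K1 (f1 p x) (f1 p y) + K2 (f2 p x) (f2 p y))).
    apply: eq_big_seq => x xs; apply: eq_big_seq => y ys; congr (_ * _).
    rewrite /cay_metric (dist_formula hG hS1 hS2) -(@DL_DD _ _ S1 S2 L) //.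
      rewrite /DL natr_sum rmorph_sum; apply: eq_bigr => p _.
      by rewrite /blk natrD rmorphD.
    move=> p; rewrite mem_cat mem_undup => /orP [] pt; apply/flattenP.
      by exists (ptails (nfG x)) => //; apply: map_f.
    by exists (ptails (nfG y)) => //; apply: map_f.
  under eq_bigr => x _ do under eq_bigr => y _ do rewrite mulr_sumr.
  under eq_bigr => x _ do rewrite exchange_big.
  rewrite exchange_big; apply: eq_bigr => p _.
  rewrite /T1 /T2 -big_split; apply: eq_bigr => x _.
  rewrite -big_split; apply: eq_bigr => y _.
  by rewrite mulrDr.
rewrite eQ.
have T1le : forall p, T1 p <= 0.
  move=> p; rewrite /T1 push_quad; apply: (cnd_le h1); first exact: undup_uniq.
    by move=> a; apply: mu_out.
  by rewrite mu_sum.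
have T2le : forall p, T2 p <= 0.
  move=> p; rewrite /T2 push_quad; apply: (cnd_le h2); first exact: undup_uniq.
    by move=> a; apply: mu_out.
  by rewrite mu_sum.
have x0s : x0 \in supp by apply: contraTT nz0 => /out ->; rewrite eqxx.
have x0f : x0 \in [seq y <- supp | lam y != 0] by rewrite mem_filter nz0 x0s.
have [x [xs' mx]] := @seq_argmax _ [seq y <- supp | lam y != 0] (fun y => size (nfG y)) x0 x0f.
move: xs'; rewrite mem_filter => /andP [lx xs].
have mx' : forall y, y \in supp -> lam y != 0 -> (size (nf hG y) <= size (nf hG x))%N.
  by move=> y ys ly; apply: mx; rewrite mem_filter ly ys.
case ex : (nfG x) => [|c p].
  exfalso; move: s0; rewrite (@big_only _ _ _ _ _ _ x) // ?xs; first by apply/eqP.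
  move=> y ne; case: (eqVneq (lam y) 0) => // ly; exfalso; move: ne.
  have ys : y \in supp by apply: contraTT ly => /out ->; rewrite eqxx.
  have := mx' y ys ly; rewrite -/nfG ex leqn0 => /nilP ey.
  suff -> : y = x by rewrite eqxx.
  by rewrite -(psi_nf hG y) -(psi_nf hG x) -/nfG ey ex.
have pL : p \in L.
  rewrite mem_undup; apply/flattenP; exists (ptails (nfG x)); first exact: map_f.
  by rewrite ex /= mem_head.
rewrite (bigD1_seq p pL uL) /=.
have rest : \sum_(q <- L | q != p) (T1 q + T2 q) <= 0.
  by apply: sumr_le0 => q _; rewrite -[0]addr0; apply: lerD.
apply: ltr_wnDr; first exact: rest.
case: c ex => a ex.
  have mua : mu (f1 p) lam supp a = lam x.
    exact: (mu_max (@prj1S G1 G2) (@ntinj1 G1 G2) out xs ex _ mx' us).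
  apply: ltr_wnDr; first exact: T2le.
  rewrite /T1 push_quad; apply: (proj2 h1); first exact: undup_uniq.
  - by move=> b; apply: mu_out.
  - by exists a; rewrite mua.
  - by rewrite mu_sum.
have mua : mu (f2 p) lam supp a = lam x.
  exact: (mu_max (@prj2S G1 G2) (@ntinj2 G1 G2) out xs ex _ mx' us).
apply: ltr_wnDl; first exact: T1le.
rewrite /T2 push_quad; apply: (proj2 h2); first exact: undup_uniq.
- by move=> b; apply: mu_out.
- by exists a; rewrite mua.
- by rewrite mu_sum.
Qed.
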